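(* Let $\mathcal C\subseteq\{0,1\}^K$ be a nonempty binary CW code of length $K$ and weight $\omega$ (not necessarily full). Then for every observation vector $\mathbf r\in\mathbb Z_{\ge0}^K$, every CSI $(\bar c_{\mathrm s},\bar c_{\mathrm n})\in(0,\infty)^2$ and every probability density $f_{\bar{\mathbf c}}$ on $(0,\infty)^2$, the set of coherent ML solutions $\arg\max_{\mathbf s\in\mathcal C} f_{\mathbf r}(\mathbf r\mid\bar{\mathbf c},\mathbf s)$ and the set of non-coherent ML solutions $\arg\max_{\mathbf s\in\mathcal C}\int\!\!\int f_{\mathbf r}(\mathbf r\mid\bar{\mathbf c},\mathbf s)f_{\bar{\mathbf c}}(\bar c_{\mathrm s},\bar c_{\mathrm n})\,\mathrm d\bar c_{\mathrm s}\,\mathrm d\bar c_{\mathrm n}$ are both equal to $\arg\max_{\mathbf s\in\mathcal C}\sum_{k=1}^K s[k]\,r[k]$; in particular they require neither instantaneous nor statistical CSI.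
   Context: Channel model: given CSI $\bar{\mathbf c}=(\bar c_{\mathrm s},\bar c_{\mathrm n})$ with $\bar c_{\mathrm s},\bar c_{\mathrm n}>0$ and a transmitted codeword $\mathbf s=[s[1],\dots,s[K]]^{\mathsf T}$, the observations $r[1],\dots,r[K]$ are independent with $r[k]$ Poisson of mean $s[k]\bar c_{\mathrm s}+\bar c_{\mathrm n}$, so $f_{\mathbf r}(\mathbf r\mid\bar{\mathbf c},\mathbf s)=\prod_{k=1}^K \frac{(\bar c_{\mathrm s}s[k]+\bar c_{\mathrm n})^{r[k]}e^{-\bar c_{\mathrm s}s[k]-\bar c_{\mathrm n}}}{r[k]!}$. A binary CW code of length $K$ and weight $\omega$ is a codebook $\mathcal C\subseteq\{0,1\}^K$ in which every codeword has exactly $\omega$ entries equal to $1$. *)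

(* Defs.v *)
From HB Require Import structures.
From mathcomp Require Import all_boot all_order all_algebra.
From mathcomp Require Import all_classical all_reals all_analysis.
Set Implicit Arguments. Unset Strict Implicit. Unset Printing Implicit Defensive.
Import Order.TTheory GRing.Theory Num.Theory.
Local Open Scope ring_scope.

(* A codeword s in {0,1}^K is a finite function 'I_K -> bool; s[k] as a real
   number is (s k)%:R. An observation vector r is a function 'I_K -> nat. *)
Definition codeword (K : nat) := {ffun 'I_K -> bool}.

Definition is_CW_code (K w : nat) (C : {set codeword K}) : Prop :=
  forall s, s \in C -> #|[set k | s k]| = w.

Definition lik (R : realType) (K : nat) (cs cn : R) (s : codeword K)
  (r : 'I_K -> nat) : R :=
  \prod_(k < K) ((cs * (s k)%:R + cn) ^+ (r k) * expR (- (cs * (s k)%:R) - cn)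
                 / ((r k)`!)%:R).

Definition argmax (T : finType) (d : Order.disp_t) (U : porderType d)
  (C : {set T}) (g : T -> U) : {set T} :=
  [set s in C | [forall s' in C, (g s' <= g s)%O]].

Definition pos_quadrant (R : realType) : set (R * R) :=
  [set x | 0 < x.1 /\ 0 < x.2].
Arguments pos_quadrant R : clear implicits.

Definition is_density (R : realType) (f : R * R -> R) : Prop :=
  [/\ measurable_fun (pos_quadrant R) f,
      (forall x, pos_quadrant R x -> 0 <= f x) &
      (\int[((@lebesgue_measure R) \x (@lebesgue_measure R))%E]_(x in pos_quadrant R)
          (f x)%:E = 1)%E].

Definition avg_lik (R : realType) (K : nat) (f : R * R -> R) (s : codeword K)
  (r : 'I_K -> nat) : \bar R :=
  (\int[((@lebesgue_measure R) \x (@lebesgue_measure R))%E]_(x in pos_quadrant R)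
      (lik x.1 x.2 s r * f x)%:E)%E.

Definition corr (R : realType) (K : nat) (s : codeword K) (r : 'I_K -> nat) : R :=
  \sum_(k < K) (s k)%:R * (r k)%:R.

(* Main.v *)
Require Import Defs.
From HB Require Import structures.
From mathcomp Require Import all_boot all_order all_algebra.
From mathcomp Require Import all_classical all_reals all_analysis.
From mathcomp Require Import measurable_realfun.
From mathcomp Require Import ring lra.
Import Order.TTheory GRing.Theory Num.Theory.
Set Implicit Arguments. Unset Strict Implicit. Unset Printing Implicit Defensive.
Local Open Scope ring_scope.

Definition nS (K : nat) (s : codeword K) (r : 'I_K -> nat) : nat :=
  (\sum_(k < K | s k) r k)%N.

Lemma corrE (R : realType) K (s : codeword K) r : corr R s r = (nS s r)%:R.
Proof.
rewrite /corr /nS natr_sum [in RHS]big_mkcond /=; apply: eq_bigr => k _.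
by case: (s k); rewrite ?mul1r ?mul0r.
Qed.

Lemma likE (R : realType) K w (s : codeword K) r (cs cn : R) :
  cn != 0 -> #|[set k | s k]| = w ->
  lik cs cn s r = (\prod_(k < K) (cn ^+ r k * expR (- cn) / ((r k)`!)%:R))
     * (expR (- cs) ^+ w * ((cs + cn) / cn) ^+ nS s r).
Proof.
move=> cn0 hw.
have -> : expR (- cs) ^+ w * ((cs + cn) / cn) ^+ nS s r =
   \prod_(k < K | s k) (((cs + cn) / cn) ^+ r k * expR (- cs)).
  rewrite big_split /= prodrXr -/(nS s r) mulrC; congr (_ * _).
  rewrite prodr_const; congr (_ ^+ _); rewrite -hw cardsE //.
rewrite [\prod_(k < K | s k) _]big_mkcond /= -big_split /=; apply: eq_bigr => k _.
case: (s k); rewrite ?mulr1 ?mulr0 ?subr0 ?opprK ?sub0r //.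
rewrite expRD exprMn exprVn; field.
  by rewrite expf_neq0 // pnatr_eq0 -lt0n fact_gt0.
by rewrite add0r oppr0 sub0r.
Qed.

Lemma argmax_ext (T : finType) d (U : porderType d) d' (V : porderType d')
  (C : {set T}) (g : T -> U) (h : T -> V) :
  (forall s s', s \in C -> s' \in C -> (g s' <= g s)%O = (h s' <= h s)%O) ->
  argmax C g = argmax C h.
Proof.
move=> H; apply/setP => s; rewrite !inE; case sC: (s \in C) => //=.
by apply: eq_forallb_in => s' s'C; rewrite H.
Qed.

Lemma mono_nat (T : finType) d (U : porderType d) (C : {set T}) (g : T -> U)
  (n : T -> nat) :
  (forall s s', s \in C -> s' \in C -> (n s' <= n s)%N -> (g s' <= g s)%O) ->
  (forall s s', s \in C -> s' \in C -> (n s' < n s)%N -> (g s' < g s)%O) ->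
  forall s s', s \in C -> s' \in C -> (g s' <= g s)%O = (n s' <= n s)%N.
Proof.
move=> H1 H2 s s' sC s'C; case: leqP => h; first by rewrite H1.
by apply: lt_geF; apply: H2.
Qed.

Lemma lik_le1 (R : realType) K (s : codeword K) r (cs cn : R) :
  0 < cs -> 0 < cn -> lik cs cn s r <= 1.
Proof.
move=> cs0 cn0; rewrite /lik; apply: prodr_ile1 => k _.
set t := cs * (s k)%:R + cn.
have t0 : 0 < t by rewrite /t; apply: ltr_wpDl => //; apply: mulr_ge0; [exact: ltW|].
have -> : - (cs * (s k)%:R) - cn = - t by rewrite /t opprD.
have f0 : 0 < ((r k)`!)%:R :> R by rewrite ltr0n fact_gt0.
apply/andP; split.
  by apply: divr_ge0 => //; apply: mulr_ge0; [apply: exprn_ge0; exact: ltW| exact: expR_ge0].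
have key : t ^+ r k / ((r k)`!)%:R <= expR t.
  case E: (r k) => [|m]; first by rewrite expr0 fact0 invr1 mul1r -expR0 ler_expR ltW.
  by apply: le_trans (expR_ge1Dxn m (ltW t0)); rewrite lerDr.
rewrite ler_pdivrMr // mul1r expRN -/(_ / _) ler_pdivrMr ?expR_gt0 //.
by rewrite -ler_pdivrMl // mulrC.
Qed.

Lemma lik_gt0 (R : realType) K (s : codeword K) r (cs cn : R) :
  0 < cs -> 0 < cn -> 0 < lik cs cn s r.
Proof.
move=> cs0 cn0; rewrite /lik; apply: prodr_gt0 => k _.
have t0 : 0 < cs * (s k)%:R + cn.
  by apply: ltr_wpDl => //; apply: mulr_ge0; [exact: ltW|].
by apply: divr_gt0; [apply: mulr_gt0; [exact: exprn_gt0|exact: expR_gt0]|rewrite ltr0n fact_gt0].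
Qed.

Lemma lik_mono (R : realType) K w (s s' : codeword K) r (cs cn : R) :
  0 < cs -> 0 < cn -> #|[set k | s k]| = w -> #|[set k | s' k]| = w ->
  ((nS s' r <= nS s r)%N -> lik cs cn s' r <= lik cs cn s r) /\
  ((nS s' r < nS s r)%N -> lik cs cn s' r < lik cs cn s r).
Proof.
move=> cs0 cn0 hs hs'.
have cnn : cn != 0 by rewrite gt_eqF.
rewrite (@likE R K w s r cs cn cnn hs) (@likE R K w s' r cs cn cnn hs') !mulrA.
set P := (X in X * _ ^+ nS s r).
have P0 : 0 < P.
  rewrite /P; apply: mulr_gt0; last exact: exprn_gt0 (expR_gt0 _).
  apply: prodr_gt0 => k _; apply: divr_gt0; last by rewrite ltr0n fact_gt0.
  by apply: mulr_gt0; [exact: exprn_gt0|exact: expR_gt0].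
have a1 : 1 < (cs + cn) / cn by rewrite ltr_pdivlMr // mul1r ltrDr.
by rewrite ler_pM2l // ltr_pM2l // (ler_eXn2l a1) (ltr_eXn2l a1).
Qed.
Local Open Scope classical_set_scope.
Section M.
Variable R : realType.
Local Notation mu := ((@lebesgue_measure R) \x (@lebesgue_measure R))%E.
Local Notation D := (pos_quadrant R).

Lemma mD : measurable D.
Proof.
have -> : D = `]0, +oo[%classic `*` `]0, +oo[%classic.
  by apply/seteqP; split => x /=; rewrite !in_itv /= !andbT.
by apply: measurableX; exact: measurable_itv.
Qed.

Lemma mfst : measurable_fun D (fun x : R * R => x.1).
Proof. exact: measurable_funS (@measurable_fst _ _ _ _). Qed.
Lemma msnd : measurable_fun D (fun x : R * R => x.2).
Proof. exact: measurable_funS (@measurable_snd _ _ _ _). Qed.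

Lemma mlik K (s : codeword K) r : measurable_fun D (fun x : R * R => lik x.1 x.2 s r).
Proof.
rewrite /lik; apply: measurable_prod => k _.
apply: measurable_funM; last exact: measurable_cst.
apply: measurable_funM.
  apply: measurable_funX; apply: measurable_funD => //; last exact: msnd.
  by apply: measurable_funM; [exact: mfst|exact: measurable_cst].
apply: measurableT_comp; first exact: measurable_expR.
apply: measurable_funB; last exact: msnd.
apply: measurable_funN; apply: measurable_funM; [exact: mfst|exact: measurable_cst].
Qed.


Variable f : R * R -> R.
Hypothesis hf : is_density f.

Lemma mf : measurable_fun D f. Proof. by case: hf. Qed.
Lemma f0 x : D x -> 0 <= f x. Proof. by case: hf => _ h _; exact: h. Qed.
Lemma f1 : (\int[mu]_(x in D) (f x)%:E = 1)%E. Proof. by case: hf. Qed.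

Lemma mg K (s : codeword K) r :
  measurable_fun D (fun x : R * R => (lik x.1 x.2 s r * f x)%:E).
Proof. by apply/measurable_EFinP; apply: measurable_funM; [exact: mlik|exact: mf]. Qed.

Lemma g0 K (s : codeword K) r x : D x -> (0 <= (lik x.1 x.2 s r * f x)%:E)%E.
Proof.
move=> Dx; rewrite lee_fin; apply: mulr_ge0; last exact: f0.
by case: Dx => a b; apply: ltW; apply: lik_gt0.
Qed.

Lemma avg_le K (s s' : codeword K) r :
  (forall x, D x -> lik x.1 x.2 s' r <= lik x.1 x.2 s r) ->
  (avg_lik f s' r <= avg_lik f s r)%E.
Proof.
move=> H; apply: ge0_le_integral; [exact: mD|exact: g0|exact: mg|exact: mg|].
by move=> x Dx; rewrite lee_fin; apply: ler_wpM2r; [exact: f0|exact: H].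
Qed.

Lemma avg_fin K (s : codeword K) r : avg_lik f s r \is a fin_num.
Proof.
have h0 : (0 <= avg_lik f s r)%E by apply: integral_ge0; exact: g0.
rewrite ge0_fin_numE //; apply: (@le_lt_trans _ _ 1%E); last exact: ltry.
rewrite -f1; apply: ge0_le_integral; [exact: mD|exact: g0|exact: mg| |].
  by apply/measurable_EFinP; exact: mf.
move=> x Dx; rewrite lee_fin -[X in _ <= X]mul1r; apply: ler_wpM2r; first exact: f0.
by case: Dx => a b; apply: lik_le1.
Qed.

Lemma avg_lt K (s s' : codeword K) r :
  (forall x, D x -> lik x.1 x.2 s' r < lik x.1 x.2 s r) ->
  (avg_lik f s' r < avg_lik f s r)%E.
Proof.
move=> H.
pose dl := fun x : R * R => ((lik x.1 x.2 s r - lik x.1 x.2 s' r) * f x)%:E.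
have dl0 x : D x -> (0 <= dl x)%E.
  move=> Dx; rewrite lee_fin; apply: mulr_ge0; last exact: f0.
  by rewrite subr_ge0; apply: ltW; apply: H.
have mdl : measurable_fun D dl.
  apply/measurable_EFinP; apply: measurable_funM; last exact: mf.
  by apply: measurable_funB; exact: mlik.
have -> : avg_lik f s r = (avg_lik f s' r + \int[mu]_(x in D) dl x)%E.
  rewrite /avg_lik -ge0_integralD //; [|exact: mD|exact: g0|exact: mg].
  by apply: eq_integral => x _; rewrite -EFinD /dl; congr (_%:E); ring.
rewrite lteDl; last exact: avg_fin.
rewrite lt_def integral_ge0 // andbT; apply/negP => /eqP hI.
have habs : (\int[mu]_(x in D) `|dl x| = 0)%E.
  rewrite -hI; apply: eq_integral => x Dx; rewrite gee0_abs //; apply: dl0.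
  by rewrite inE in Dx.
have := (ae_eq_integral_abs mu mD mdl).1 habs => hae.
have hae2 : ae_eq mu D (fun x => (f x)%:E) (cst 0%E).
  apply: filterS hae => x h Dx; move: (h Dx); rewrite /dl /= => /eqP.
  rewrite eqe mulf_eq0 subr_eq0 => /orP[/eqP E|/eqP ->] //.
  by have := H x Dx; rewrite E ltxx.
have := f1; rewrite (@ae_eq_integral _ _ _ mu D (cst 0%E) (fun x => (f x)%:E) mD _ _ hae2) ?integral0 //.
- by move=> [] /eqP; rewrite eq_sym oner_eq0.
- by apply/measurable_EFinP; exact: mf.
Qed.

End M.

Theorem corollary1 (R : realType) (K w : nat) (C : {set codeword K}) :
  C != finset.set0 -> is_CW_code w C ->
  forall (r : 'I_K -> nat) (cs cn : R), 0 < cs -> 0 < cn ->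
  forall f : R * R -> R, is_density f ->
    argmax C (fun s => lik cs cn s r) = argmax C (fun s => corr R s r) /\
    argmax C (fun s => avg_lik f s r) = argmax C (fun s => corr R s r).
Proof.
move=> _ hCW r cs cn cs0 cn0 f hf.
have Ec : argmax C (fun s => corr R s r) = argmax C (fun s => nS s r).
  apply: (argmax_ext (h := fun s => nS s r)) => s s' _ _; by rewrite !corrE ler_nat leEnat.
rewrite Ec; split.
  apply: argmax_ext => s s' sC s'C; rewrite leEnat.
  apply: (@mono_nat _ _ _ C (fun s => lik cs cn s r) (fun s => nS s r)) => //.
    by move=> a b aC bC; exact: (lik_mono r cs0 cn0 (hCW _ aC) (hCW _ bC)).1.
  by move=> a b aC bC; exact: (lik_mono r cs0 cn0 (hCW _ aC) (hCW _ bC)).2.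
apply: argmax_ext => s s' sC s'C; rewrite leEnat.
apply: (@mono_nat _ _ _ C (fun s => avg_lik f s r) (fun s => nS s r)) => //.
  move=> a b aC bC h; apply: avg_le => // x [x1 x2].
  exact: (lik_mono r x1 x2 (hCW _ aC) (hCW _ bC)).1 h.
move=> a b aC bC h; apply: avg_lt => // x [x1 x2].
exact: (lik_mono r x1 x2 (hCW _ aC) (hCW _ bC)).2 h.
Qed.
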